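(* Let $\mathcal{M}\subseteq\binom{[n]}{k}$ be a positroid with Grassmann necklace $(I_1,\dots,I_n)$ and decorated permutation $\pi^{:}=(\pi,col)$, and let $j\in[n]$ with $\pi(j)\neq j$. Put $\mathcal{M}':=\{H\in\mathcal{M} : j\in H\}$. Then for every $a\in[n]$ with $j\notin I_a$, the set $I_a\setminus I_j$ is nonempty and $$\bigl(I_a\setminus\{\max_a(I_a\setminus I_j)\}\bigr)\cup\{j\}\in\mathcal{M}'.$$
   Context: Indices are taken modulo $n$; we identify $[n]$ with $\mathbb{Z}_n$. For $t\in[n]$, the total order $\le_t$ on $[n]$ is $t<_t t+1<_t\cdots<_t n<_t 1<_t\cdots<_t t-1$. For $A,B\in\binom{[n]}{k}$ with $A=\{i_1<_t\cdots<_t i_k\}$ and $B=\{j_1<_t\cdots<_t j_k\}$, write $A\le_t B$ (Gale order) iff $i_s\le_t j_s$ for all $s$. For $D\subseteq[n]$, $\max_a(D)$ is the largest element of $D$ in $\le_a$. A Grassmann necklace is a sequence $(I_1,\dots,I_n)$ of subsets of $[n]$ such that for each $i$: if $i\in I_i$ then $I_{i+1}=(I_i\setminus\{i\})\cup\{j'\}$ for some $j'\in[n]$, and if $i\notin I_i$ then $I_{i+1}=I_i$. A positroid is a set $\mathcal{M}\subseteq\binom{[n]}{k}$ for which there is a Grassmann necklace $(I_1,\dots,I_n)$ with $\mathcal{M}=\{H : H\ge_t I_t \text{ for all } t\in[n]\}$; then $I_t$ is the $\le_t$-minimum of $\mathcal{M}$ and $(I_1,\dots,I_n)$ is called the Grassmann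 necklace of $\mathcal{M}$. A decorated permutation is a pair $(\pi,col)$ with $\pi\in S_n$ and $col$ a function from the fixed points of $\pi$ to $\{1,-1\}$. The necklace and decorated permutation correspond bijectively via: if $I_{i+1}=(I_i\setminus\{i\})\cup\{j'\}$ with $j'\ne i$ then $\pi(i)=j'$; if $I_{i+1}=I_i$ and $i\notin I_i$ then $\pi(i)=i$, $col(i)=1$; if $I_{i+1}=I_i$ and $i\in I_i$ then $\pi(i)=i$, $col(i)=-1$. Conversely $I_r=\{i\in[n] : i<_r\pi^{-1}(i)\text{ or }(\pi(i)=i\text{ and }col(i)=-1)\}$. *)

(* Defs.v *)
(* [n] is represented by 'I_n (0-based; 0..n-1), identified with Z_n;
   i+1 is the cyclic successor ordS. *)
From mathcomp Require Import all_boot.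
Set Implicit Arguments. Unset Strict Implicit. Unset Printing Implicit Defensive.

Section Positroid.
Variable n : nat.
Local Notation E := 'I_n.

(* position of x in the cyclic order <=_t : t, t+1, ..., t-1 *)
Definition cyc_rank (t x : E) : nat := (x + n - t) %% n.
Definition cyc_le (t : E) : rel E := fun x y => cyc_rank t x <= cyc_rank t y.

Definition cyc_sorted (t : E) (A : {set E}) : seq E := sort (cyc_le t) (enum A).

Definition gale_le (t : E) (A B : {set E}) : bool :=
  (#|A| == #|B|) &&
  all (fun s => cyc_le t (nth t (cyc_sorted t A) s) (nth t (cyc_sorted t B) s))
      (iota 0 #|A|).

(* max_a(D): largest element of D in <=_a (default a if D is empty) *)
Definition cyc_max (a : E) (D : {set E}) : E :=
  odflt a [pick m in D | [forall y in D, cyc_le a y m]].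

Definition grassmann_necklace (I : E -> {set E}) : Prop :=
  forall i : E,
    (i \in I i -> exists j' : E, I (ordS i) = (I i :\ i) :|: [set j']) /\
    (i \notin I i -> I (ordS i) = I i).

Definition positroid_of (k : nat) (I : E -> {set E}) : {set {set E}} :=
  [set H : {set E} | (#|H| == k) && [forall t, gale_le t (I t) H]].

(* permutation part pi of the decorated permutation of the necklace I:
   pi(i) = j' if I_{i+1} = (I_i \ {i}) u {j'} with j' <> i, and pi(i) = i otherwise *)
Definition neck_perm (I : E -> {set E}) (i : E) : E :=
  odflt i [pick j' | (j' != i) && (i \in I i) && (I (ordS i) == (I i :\ i) :|: [set j'])].

End Positroid.

(* Main.v *)
Require Import Defs.
From mathcomp Require Import all_boot.
Set Implicit Arguments. Unset Strict Implicit. Unset Printing Implicit Defensive.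

Section S.
Variable n : nat.
Local Notation E := 'I_n.

Definition sh (t : E) (i : nat) : E := iter i (@ordS n) t.

Lemma val_sh (t : E) i : val (sh t i) = (t + i) %% n.
Proof.
elim: i => [|i IH] /=; first by rewrite addn0 modn_small.
by rewrite /sh /= -/(sh t i) IH -addn1 modnDml addn1 addnS.
Qed.

Lemma rank_sh (t : E) i : cyc_rank t (sh t i) = i %% n.
Proof.
rewrite /cyc_rank val_sh.
have ht : t <= n by apply: ltnW.
rewrite -addnBA // modnDml -addnA (addnC i) addnA subnKC // modnDl //.
Qed.

Lemma sh_rank (t r : E) : sh t (cyc_rank t r) = r.
Proof.
apply: val_inj; rewrite val_sh /cyc_rank.
have ht : t <= n by apply: ltnW.
rewrite modnDmr addnBA; last by rewrite (leq_trans ht) // leq_addl.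
by rewrite addKn modnDr modn_small.
Qed.

Lemma rank_lt (t r : E) : cyc_rank t r < n.
Proof. by rewrite ltn_pmod // (leq_ltn_trans (leq0n t) (ltn_ord t)). Qed.

Lemma sh_n (t : E) : sh t n = t.
Proof. by apply: val_inj; rewrite val_sh modnDr modn_small. Qed.

Lemma sh_add (t : E) i k : sh t (i + k) = sh (sh t i) k.
Proof. by rewrite /sh addnC iterD. Qed.

Lemma rank_shsh (t : E) d e : d < n -> e < n ->
  cyc_rank (sh t d) (sh t e) = if d <= e then e - d else e + n - d.
Proof.
move=> hd he.
set i := (if d <= e then e - d else e + n - d).
have hi : i < n.
  rewrite /i; case: ifP => hde.
    by rewrite (leq_ltn_trans (leq_subr _ _)).
  have hed : e < d by rewrite ltnNge hde.
  rewrite ltn_subLR; first by rewrite ltn_add2r.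
  by rewrite (leq_trans (ltnW hd)) // leq_addl.
have -> : sh t e = sh (sh t d) i.
  rewrite -sh_add /i; case: ifP => hde; first by rewrite subnKC.
  rewrite addnBA; last by rewrite (leq_trans (ltnW hd)) // leq_addl.
  by rewrite addKn addnC sh_add sh_n.
by rewrite rank_sh modn_small.
Qed.
End S.

Section N.
Variable n : nat.
Local Notation E := 'I_n.
Variable I : E -> {set E}.
Hypothesis hI : grassmann_necklace I.

Lemma step_keep (s y : E) : y \in I s -> y != s -> y \in I (ordS s).
Proof.
move=> hy hys; have [h1 h2] := hI s.
case: (boolP (s \in I s)) => hs; last by rewrite h2.
by have [j' ->] := h1 hs; rewrite in_setU in_setD1 hys hy.
Qed.

Lemma step_in (s : E) (P : {set E}) : s \in P ->
  #|I (ordS s) :&: P| <= #|I s :&: P|.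
Proof.
move=> sP; have [h1 h2] := hI s.
case: (boolP (s \in I s)) => hs; last by rewrite h2.
have [j' ->] := h1 hs.
rewrite (cardsD1 s (I s :&: P)) in_setI hs sP add1n.
apply: (leq_trans (subset_leq_card (_ : _ \subset ((I s :&: P) :\ s) :|: [set j']))).
  apply/subsetP=> y; rewrite !inE; by case: (y == j'); rewrite /= ?orbT ?orbF // andbA.
by rewrite setUC cardsU1 -add1n leq_add2r leq_b1.
Qed.

Lemma step_out (s : E) (P : {set E}) : s \notin P ->
  #|I s :&: P| <= #|I (ordS s) :&: P|.
Proof.
move=> sP; apply: subset_leq_card; apply/subsetP=> y; rewrite !inE => /andP[hy yP].
rewrite yP andbT step_keep //; apply: contraNneq sP => <-; done.
Qed.

Lemma step_strict (s y : E) (P : {set E}) : s \in P -> y \notin I s ->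
  y \in I (ordS s) -> y \notin P -> #|I (ordS s) :&: P| < #|I s :&: P|.
Proof.
move=> sP ys ys' yP; have [h1 h2] := hI s.
case: (boolP (s \in I s)) => hs; last by move: ys'; rewrite h2 // (negbTE ys).
have [j' hj'] := h1 hs; rewrite hj' in ys' *.
have yj : y = j'.
  by move: ys'; rewrite !inE (negbTE ys) andbF /= => /eqP.
rewrite (cardsD1 s (I s :&: P)) in_setI hs sP add1n ltnS.
apply: subset_leq_card; apply/subsetP=> z; rewrite !inE.
case: (z =P j') => [->|_]; first by rewrite -yj (negbTE yP) andbF.
by rewrite orbF -andbA.
Qed.

Lemma persist (r y : E) : y \in I r ->
  forall i, i <= cyc_rank r y -> y \in I (sh r i).
Proof.
move=> hy; elim=> [|i IH] hi //=.
rewrite /sh /= -/(sh r i) step_keep ?IH ?(ltnW hi) //.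
apply/eqP=> e; have := rank_sh r i; rewrite -e => h.
have : i < n by apply: leq_ltn_trans (ltnW hi) (rank_lt r y).
move=> hin; move: h; rewrite modn_small // => h.
by rewrite -h ltnn in hi.
Qed.

Lemma ivt (t y : E) d : y \notin I (sh t 0) -> y \in I (sh t d) ->
  exists2 i, i < d & (y \notin I (sh t i)) && (y \in I (sh t i.+1)).
Proof.
move=> h0; elim: d => [|d IH] hd; first by rewrite hd in h0.
case: (boolP (y \in I (sh t d))) => h.
  by have [i hi hh] := IH h; exists i => //; apply: ltnW.
by exists d => //; rewrite h hd.
Qed.

Section Mono.
Variables (t : E) (p : nat).
Hypothesis hp : p <= n.
Let P := [set y | cyc_rank t y < p].
Let f i := #|I (sh t i) :&: P|.

Lemma mono1 i i' : i <= i' -> i' <= p -> f i' <= f i.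
Proof.
move=> hii'; elim: i' hii' => [|i' IH]; first by rewrite leqn0 => /eqP->.
rewrite leq_eqVlt => /orP[/eqP<-//|hi] hi'.
apply: leq_trans (IH hi (ltnW hi')).
rewrite /f /sh /= -/(sh t i'); apply: step_in.
by rewrite inE rank_sh modn_small // (leq_trans hi').
Qed.

Lemma mono2 d : p + d <= n -> f (p + d) <= f n.
Proof.
move=> h; have : n - (p + d) + (p + d) = n by rewrite subnK.
move: (n - (p + d)) => e; elim: e d h => [|e IH] d h he.
  by rewrite -he.
have h1 : p + d.+1 <= n by rewrite -he addnS addSn ltnS leq_addl.
have h2 : e + (p + d.+1) = n by rewrite -he !addnS addSn.
apply: leq_trans (IH d.+1 h1 h2).
rewrite /f addnS /sh /= -/(sh t (p + d)); apply: step_out.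
rewrite inE rank_sh modn_small; first by rewrite -leqNgt leq_addr.
by rewrite -addnS.
Qed.

Lemma mono0 i : i <= n -> f i <= f 0.
Proof.
move=> hi; case: (leqP i p) => hip; first by apply: mono1.
have -> : i = p + (i - p) by rewrite subnKC // ltnW.
apply: leq_trans (mono2 _) _; first by rewrite subnKC // ltnW.
by rewrite /f sh_n.
Qed.
End Mono.
End N.

Section G.
Variable n : nat.
Local Notation E := 'I_n.

Lemma cyc_le_trans (t : E) : transitive (cyc_le t).
Proof. by move=> x y z; rewrite /cyc_le; apply: leq_trans. Qed.
Lemma cyc_le_refl (t : E) : reflexive (cyc_le t).
Proof. by move=> x; rewrite /cyc_le. Qed.
Lemma cyc_le_total (t : E) : total (cyc_le t).
Proof. by move=> x y; rewrite /cyc_le leq_total. Qed.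

Lemma count_sorted (t : E) (C : {set E}) q :
  #|C :&: [set y | cyc_rank t y < q]| =
  count (fun y => cyc_rank t y < q) (cyc_sorted t C).
Proof.
rewrite cardE (perm_size (enum_setI _ _)) size_filter.
have hp : perm_eq (cyc_sorted t C) (enum C) by rewrite /cyc_sorted perm_sort perm_refl.
rewrite (permP hp); apply: eq_count => y; by rewrite inE.
Qed.

Lemma size_sorted (t : E) (C : {set E}) : size (cyc_sorted t C) = #|C|.
Proof. by rewrite size_sort cardE. Qed.

Lemma gale_count (t : E) (A B : {set E}) : #|A| = #|B| ->
  (forall q, q <= n -> #|B :&: [set y | cyc_rank t y < q]|
                      <= #|A :&: [set y | cyc_rank t y < q]|) ->
  gale_le t A B.
Proof.
move=> hAB hq; rewrite /gale_le hAB eqxx /=.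
apply/allP => s; rewrite mem_iota add0n => /andP[_ hs].
set sA := cyc_sorted t A; set sB := cyc_sorted t B.
have szA : size sA = #|B| by rewrite size_sorted hAB.
have szB : size sB = #|B| by rewrite size_sorted.
have stA : sorted (cyc_le t) sA by apply: sort_sorted; apply: cyc_le_total.
have stB : sorted (cyc_le t) sB by apply: sort_sorted; apply: cyc_le_total.
rewrite /cyc_le leqNgt; apply/negP => hlt.
set b := nth t sB s.
set pr := fun y : E => cyc_rank t y < (cyc_rank t b).+1.
have := hq (cyc_rank t b).+1 (rank_lt t b).
rewrite !count_sorted -/sA -/sB -/pr.
have h1 : s.+1 <= count pr sB.
  rewrite -(cat_take_drop s.+1 sB) count_cat.
  apply: leq_trans (leq_addr _ _).
  have szt : size (take s.+1 sB) = s.+1 by rewrite size_takel // szB.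
  suff /eqP -> : count pr (take s.+1 sB) == size (take s.+1 sB) by rewrite szt.
  rewrite -all_count; apply/(all_nthP t) => i; rewrite szt => hi.
  rewrite nth_take // /pr ltnS.
  by apply: (sorted_leq_nth (@cyc_le_trans t) (@cyc_le_refl t) t stB); rewrite ?inE ?szB // (leq_trans hi).
have h2 : count pr sA <= s.
  rewrite -(cat_take_drop s sA) count_cat.
  have -> : count pr (drop s sA) = 0.
    apply/eqP; rewrite -leqn0 leqNgt -has_count; apply/(has_nthP t) => -[i].
    rewrite size_drop => hi; rewrite nth_drop /pr ltnS leqNgt; apply/negP/negPn.
    apply: leq_trans hlt _.
    apply: (sorted_leq_nth (@cyc_le_trans t) (@cyc_le_refl t) t stA);
      rewrite ?inE ?szA // ?leq_addr //.
    by rewrite -ltn_subRL -szA.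
  rewrite addn0; apply: leq_trans (count_size _ _) _.
  by rewrite size_take; case: ifP => // /negbT; rewrite -leqNgt.
move=> h; have := leq_trans h1 (leq_trans h (h2)); by rewrite ltnn.
Qed.

Lemma cyc_max_spec (a : E) (D : {set E}) : D != set0 ->
  cyc_max a D \in D /\ forall y, y \in D -> cyc_rank a y <= cyc_rank a (cyc_max a D).
Proof.
case/set0Pn => x0 hx0; rewrite /cyc_max.
case: pickP => [m /andP[hm /forallP hall]|hnone] /=.
  split=> // y hy; by have := hall y; rewrite hy.
case: (arg_maxnP (cyc_rank a) hx0) => m hm hmax.
have hm' : m \in D by exact: hm.
have : (m \in D) && [forall y in D, cyc_le a y m].
  by rewrite hm' /=; apply/forallP => y; apply/implyP => hy; exact: (hmax y hy).
by rewrite hnone.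
Qed.
End G.

Section K.
Variable n : nat.
Local Notation E := 'I_n.
Variable I : E -> {set E}.
Hypothesis hI : grassmann_necklace I.

Lemma key (a j m t : E) p : p <= n -> j \in I j -> j \notin I a -> m \in I a -> m \notin I j ->
  (forall y, y \in I a -> y \notin I j -> cyc_rank a y <= cyc_rank a m) ->
  #|((I a :\ m) :|: [set j]) :&: [set y | cyc_rank t y < p]|
    <= #|I t :&: [set y | cyc_rank t y < p]|.
Proof.
move=> hp hjj hja hma hmj hmax.
set P := [set y | cyc_rank t y < p].
set A := cyc_rank t a; set J := cyc_rank t j; set Mm := cyc_rank t m.
have ha : sh t A = a by apply: sh_rank.
have hjs : sh t J = j by apply: sh_rank.
have hms : sh t Mm = m by apply: sh_rank.
have An : A < n by apply: rank_lt. 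
have Jn : J < n by apply: rank_lt. 
have Mn : Mm < n by apply: rank_lt. 
have f0 : forall i, i <= n -> #|I (sh t i) :&: P| <= #|I t :&: P|.
  by move=> i hi; exact: (mono0 hI t hp hi).
have hfA : #|I a :&: P| <= #|I t :&: P| by rewrite -ha f0 // ltnW.
case: (boolP (j \in P)) => jP; last first.
  apply: leq_trans hfA; apply: subset_leq_card; apply/subsetP => y.
  rewrite !(in_setI, in_setU, in_setD1, in_set1); case: (y =P j) => [->|_]; first by rewrite (negbTE jP) andbF.
  by rewrite orbF => /andP[/andP[_ ->] ->].
case: (boolP (m \in P)) => mP.
  apply: leq_trans hfA.
  rewrite (cardsD1 m (I a :&: P)) in_setI hma mP add1n.
  apply: (leq_trans (subset_leq_card (_ : _ \subset ((I a :&: P) :\ m) :|: [set j]))).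
    apply/subsetP=> y; rewrite !(in_setI, in_setU, in_setD1, in_set1); by case: (y == j); rewrite /= ?orbT ?orbF // andbA.
  by rewrite setUC cardsU1 -add1n leq_add2r leq_b1.
have hsub : #|((I a :\ m) :|: [set j]) :&: P| <= (#|I a :&: P|).+1.
  apply: (leq_trans (subset_leq_card (_ : _ \subset (I a :&: P) :|: [set j]))).
    apply/subsetP=> y; rewrite !(in_setI, in_setU, in_setD1, in_set1); case: (y == j); rewrite /= ?orbT ?orbF //.
    by case/andP=> /andP[_ ->] ->.
  by rewrite setUC cardsU1 -add1n leq_add2r leq_b1.
apply: leq_trans hsub _.
have JP : J < p by move: jP; rewrite inE.
have MP : p <= Mm by move: mP; rewrite inE -leqNgt.
have JM : J < Mm by apply: leq_trans JP MP.
have hlt : cyc_rank a m < cyc_rank a j.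
  case: (leqP (cyc_rank a j) (cyc_rank a m)) => // h.
  have := persist hI hma h; rewrite sh_rank => hh; by rewrite hh in hmj.
have e1 := rank_shsh t An Mn; rewrite ha hms in e1.
have e2 := rank_shsh t An Jn; rewrite ha hjs in e2.
rewrite e1 e2 in hlt.
have [JA AM] : J < A /\ A <= Mm.
  case: (leqP A J) => hAJ.
    rewrite hAJ (leq_trans hAJ (ltnW JM)) in hlt.
    by have := leq_sub2r A (ltnW JM); rewrite leqNgt hlt.
  case: (leqP A Mm) => hAM; first by [].
  have h1 : (A <= Mm) = false by rewrite leqNgt hAM.
  have h2 : (A <= J) = false by rewrite leqNgt hAJ.
  rewrite h1 h2 in hlt.
  by have := leq_sub2r A (leq_add (ltnW JM) (leqnn n)); rewrite leqNgt hlt.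
case: (leqP p A) => hpA.
  apply: (@leq_trans #|I j :&: P|); last by rewrite -hjs f0 // ltnW.
  apply: proper_card; apply/properP; split; last first.
    by exists j; rewrite !in_setI ?hjj ?jP ?(negbTE hja).
  apply/subsetP => y; rewrite !in_setI => /andP[hya hyP]; rewrite hyP andbT.
  have hyP' := hyP; rewrite inE in hyP'.
  apply/negPn/negP => hyj.
  have := hmax y hya hyj.
  set Y := cyc_rank t y.
  have hys : sh t Y = y by apply: sh_rank.
  have Yn : Y < n by apply: rank_lt.
  have e3 := rank_shsh t An Yn; rewrite ha hys in e3.
  rewrite e3 e1 AM (_ : (A <= Y) = false); last by apply/negbTE; rewrite -ltnNge (leq_trans hyP').
  rewrite leq_sub2rE // => hh.
  by have := leq_trans (leq_addl Y n) hh; rewrite leqNgt Mn.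
have hmt : m \notin I t.
  apply/negP => hmt; have := persist hI hmt (ltnW JM); rewrite hjs => hh.
  by rewrite hh in hmj.
have hmA : m \in I (sh t A) by rewrite ha.
have [i hiA /andP[hi1 hi2]] := ivt (I:=I) (t:=t) (d:=A) hmt hmA.
have hin : i < n by apply: ltn_trans hiA An.
have hsP : sh t i \in P by rewrite inE rank_sh modn_small // (ltn_trans hiA hpA).
have hstep := step_strict hI hsP hi1 hi2 mP.
have hm1 := mono1 hI t hp hiA (ltnW hpA).
rewrite -ha; apply: leq_ltn_trans hm1 _.
exact: leq_trans hstep (f0 i (ltnW hin)).
Qed.
End K.

Theorem mainTheorem1 (n k : nat) (I : 'I_n -> {set 'I_n}) (M : {set {set 'I_n}})
  (hI : grassmann_necklace I) (hIk : forall t, #|I t| = k)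
  (hM : M = positroid_of k I)
  (j : 'I_n) (hj : neck_perm I j != j) :
  forall a : 'I_n, j \notin I a ->
    (I a :\: I j != set0) /\
    ((I a :\ cyc_max a (I a :\: I j)) :|: [set j])
      \in [set H in M | j \in H].
Proof.
move=> a hja.
have hjj : j \in I j.
  move: hj; rewrite /neck_perm; case: pickP => [x /andP[/andP[_ h] _]|] //=.
  by rewrite eqxx.
have hD : I a :\: I j != set0.
  apply/negP; rewrite setD_eq0 => hsub.
  have : I a == I j by rewrite eqEcard hsub !hIk leqnn.
  by move/eqP => e; rewrite e hjj in hja.
split => //.
have [hmD hmax] := cyc_max_spec a hD.
set m := cyc_max a (I a :\: I j) in hmD hmax *.
move: hmD; rewrite in_setD => /andP[hmj hma].
have hmax' : forall y, y \in I a -> y \notin I j -> cyc_rank a y <= cyc_rank a m.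
  by move=> y h1 h2; apply: hmax; rewrite in_setD h1 h2.
have hcard : #|(I a :\ m) :|: [set j]| = k.
  rewrite setUC cardsU1 in_setD1 (negbTE hja) andbF /= add1n.
  by rewrite -(hIk a) (cardsD1 m (I a)) hma.
rewrite inE hM in_setU in_set1 eqxx orbT andbT /positroid_of inE hcard eqxx /=.
apply/forallP => t; apply: gale_count; first by rewrite hcard hIk.
by move=> q hq; apply: key.
Qed.
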